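(* Let $(\mathcal A,\le_{\mathcal A},\vee,\wedge,\bot,\top)$ be a complete lattice with monotone maps $\alpha:\mathcal Q\to\mathcal A$ and $\gamma:\mathcal A\to\mathcal Q$ forming a Galois embedding. Then the following are equivalent: (1) $\mathcal A$ is a well-structured abstract domain; (2) for every $a\in\mathcal A$, every family $\rho_i\in\mathcal D(\mathcal H_V)$ and reals $x_i>0$ ($i=1,2,\dots$) with $\sum_i x_i\rho_i\in\mathcal D(\mathcal H_V)$: $\sum_i x_i\rho_i\in\gamma(a)$ iff $\rho_i\in\gamma(a)$ for all $i$; (3) for every $a\in\mathcal A$, the set $\gamma(a)\subseteq\mathcal D(\mathcal H_V)$ is (i) convex; (ii) an $\omega$-cpo: if $\rho_i\in\gamma(a)$ and $\rho_i\sqsubseteq\rho_{i+1}$ for all $i\ge1$ then $\bigsqcup_i\rho_i\in\gamma(a)$; (iii) down-closed: $\rho\sqsubseteq\sigma$ and $\sigma\in\gamma(a)$ imply $\rho\in\gamma(a)$; (iv) closed under positive scalar multiplication: if $\rho\in\gamma(a)$, $x>0$ and $x\rho\in\mathcal D(\mathcal H_V)$ then $x\rho\in\gamma(a)$.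
   Context: Fix a finite set $V$ of quantum variables, each a qubit with state space $\mathcal H_q\cong\mathbb C^2$; $\mathcal H_V=\bigotimes_{q\in V}\mathcal H_q$. $\mathcal D(\mathcal H_V)$ is the set of partial density operators on $\mathcal H_V$ (positive operators of trace at most $1$), ordered by the Löwner order $\sqsubseteq$ ($A\sqsubseteq B$ iff $B-A$ is positive); $\bigsqcup$ denotes least upper bound in this order. The concrete domain is $\mathcal Q=2^{\mathcal D(\mathcal H_V)}$ ordered by inclusion. For posets $C,A$ and monotone $\alpha:C\to A$, $\gamma:A\to C$, $(\alpha,\gamma)$ is a Galois connection if $c\le_C\gamma(a)\iff\alpha(c)\le_A a$ for all $c,a$, and a Galois embedding if moreover $\alpha\circ\gamma=\mathrm{id}_A$. A complete lattice $(\mathcal A,\le_{\mathcal A},\vee,\wedge,\bot,\top)$ with monotone $\alpha:\mathcal Q\to\mathcal A$, $\gamma:\mathcal A\to\mathcal Q$ is a well-structured abstract domain if (a) $(\alpha,\gamma)$ is a Galois embedding, and (b) for any family $\rho_i\in\mathcal D(\mathcal H_V)$ and reals $x_i>0$ ($i=1,2,\dots$) with $\sum_i x_i\rho_i\in\mathcal D(\mathcal H_V)$, $\alpha(\sum_i x_i\rho_i)=\bigvee_i\alpha(\rho_i)$, where $\alpha(\rho)$ abbreviates $\alpha(\{\rho\})$. *)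

(* Defs.v *)
From mathcomp Require Import all_boot all_order all_algebra.
From mathcomp Require Export complex reals classical_sets.
Import Order.TTheory GRing.Theory Num.Theory.
Set Implicit Arguments. Unset Strict Implicit. Unset Printing Implicit Defensive.
Local Open Scope ring_scope.
Local Open Scope complex_scope.
Local Open Scope classical_set_scope.

(* The scalars: complex numbers R[i] over an arbitrary real field R : realType
   (any realType is a model of the reals).  n = |V| is the number of qubits,
   so H_V = C^(2^n) and operators are 'M[R[i]]_(2^n). *)

Definition psd (R : realType) (n : nat) (A : 'M[R[i]]_(2 ^ n)) : Prop :=
  forall v : 'cV[R[i]]_(2 ^ n),
    0 <= ((map_mx Num.conj v)^T *m A *m v) ord0 ord0.

Definition pdo (R : realType) (n : nat) (A : 'M[R[i]]_(2 ^ n)) : Prop :=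
  psd A /\ \tr A <= 1.

Definition PDO (R : realType) (n : nat) := {A : 'M[R[i]]_(2 ^ n) | pdo A}.

Definition lowner (R : realType) (n : nat) (A B : 'M[R[i]]_(2 ^ n)) : Prop :=
  psd (B - A).

Definition is_lub_pdo (R : realType) (n : nat) (rho : nat -> PDO R n)
  (sigma : PDO R n) : Prop :=
  (forall i, lowner (proj1_sig (rho i)) (proj1_sig sigma)) /\
  (forall tau : PDO R n, (forall i, lowner (proj1_sig (rho i)) (proj1_sig tau)) ->
      lowner (proj1_sig sigma) (proj1_sig tau)).

Definition mx_cvg (R : realType) (n : nat) (u : nat -> 'M[R[i]]_(2 ^ n))
  (L : 'M[R[i]]_(2 ^ n)) : Prop :=
  forall e : R, 0 < e -> exists N : nat, forall k : nat, (N <= k)%N ->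
    forall i j, `|u k i j - L i j| < e%:C.

(* Families rho_i (i = 1, 2, ...): K = Some k is the finite family of the
   k.+1 indices 0..k; K = None is an infinite family indexed by nat. *)
Definition in_fam (K : option nat) (i : nat) : Prop :=
  match K with Some k => (i <= k)%N | None => True end.

Definition wsum_is (R : realType) (n : nat) (K : option nat) (x : nat -> R)
  (rho : nat -> PDO R n) (S : 'M[R[i]]_(2 ^ n)) : Prop :=
  match K with
  | Some k => S = \sum_(i < k.+1) (x i)%:C *: proj1_sig (rho i)
  | None => mx_cvg (fun m => \sum_(i < m) (x i)%:C *: proj1_sig (rho i)) S
  end.

Definition is_lub_in (d : Order.disp_t) (T : porderType d) (P : T -> Prop) (s : T)
  : Prop :=
  (forall y, P y -> (y <= s)%O) /\
  (forall z, (forall y, P y -> (y <= z)%O) -> (s <= z)%O).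

Definition complete_lattice (d : Order.disp_t) (T : porderType d) : Prop :=
  forall P : T -> Prop, exists s, is_lub_in P s.

(* Q = 2^{D(H_V)} ordered by inclusion *)
Definition galois_connection (R : realType) (n : nat) (d : Order.disp_t)
  (A : porderType d) (alpha : set (PDO R n) -> A) (gamma : A -> set (PDO R n))
  : Prop :=
  (forall c c' : set (PDO R n), c `<=` c' -> (alpha c <= alpha c')%O) /\
  (forall a b : A, (a <= b)%O -> gamma a `<=` gamma b) /\
  (forall (c : set (PDO R n)) (a : A), c `<=` gamma a <-> (alpha c <= a)%O).

Definition galois_embedding (R : realType) (n : nat) (d : Order.disp_t)
  (A : porderType d) (alpha : set (PDO R n) -> A) (gamma : A -> set (PDO R n))
  : Prop :=
  galois_connection alpha gamma /\ (forall a : A, alpha (gamma a) = a).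

Definition well_structured (R : realType) (n : nat) (d : Order.disp_t)
  (A : porderType d) (alpha : set (PDO R n) -> A) (gamma : A -> set (PDO R n))
  : Prop :=
  galois_embedding alpha gamma /\
  (forall (K : option nat) (x : nat -> R) (rho : nat -> PDO R n) (S : PDO R n),
     (forall i, in_fam K i -> 0 < x i) ->
     wsum_is K x rho (proj1_sig S) ->
     is_lub_in (fun b => exists2 i, in_fam K i & b = alpha [set rho i])
               (alpha [set S])).

Definition sum_closed (R : realType) (n : nat) (d : Order.disp_t)
  (A : porderType d) (gamma : A -> set (PDO R n)) : Prop :=
  forall (a : A) (K : option nat) (x : nat -> R) (rho : nat -> PDO R n) (S : PDO R n),
    (forall i, in_fam K i -> 0 < x i) ->
    wsum_is K x rho (proj1_sig S) ->
    (gamma a S <-> (forall i, in_fam K i -> gamma a (rho i))).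

Definition convex_pdo (R : realType) (n : nat) (P : set (PDO R n)) : Prop :=
  forall (rho sigma tau : PDO R n) (t : R), P rho -> P sigma -> 0 <= t <= 1 ->
    proj1_sig tau = t%:C *: proj1_sig rho + (1 - t)%:C *: proj1_sig sigma ->
    P tau.

Definition omega_cpo_pdo (R : realType) (n : nat) (P : set (PDO R n)) : Prop :=
  forall (rho : nat -> PDO R n) (sigma : PDO R n),
    (forall i, P (rho i)) ->
    (forall i, lowner (proj1_sig (rho i)) (proj1_sig (rho i.+1))) ->
    is_lub_pdo rho sigma -> P sigma.

Definition down_closed_pdo (R : realType) (n : nat) (P : set (PDO R n)) : Prop :=
  forall rho sigma : PDO R n, lowner (proj1_sig rho) (proj1_sig sigma) ->
    P sigma -> P rho.

Definition scale_closed_pdo (R : realType) (n : nat) (P : set (PDO R n)) : Prop :=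
  forall (rho tau : PDO R n) (x : R), P rho -> 0 < x ->
    proj1_sig tau = x%:C *: proj1_sig rho -> P tau.

(* Main.v *)
Require Import Defs.
From mathcomp Require Import all_boot all_order all_algebra.
From mathcomp Require Import complex reals classical_sets.
From mathcomp Require Import ring lra.
Import Order.TTheory GRing.Theory Num.Theory.
Set Implicit Arguments. Unset Strict Implicit. Unset Printing Implicit Defensive.
Local Open Scope ring_scope.
Local Open Scope complex_scope.
Local Open Scope classical_set_scope.
Local Notation cRe := complex.Re.
Local Notation cIm := complex.Im.
Local Notation normc := ComplexField.Normc.normc.
Section Basics.
Variable R : realType.
Variable n : nat.
Local Notation N := (2 ^ n)%N.
Local Notation C := R[i].
Local Notation M := 'M[C]_N.
Local Notation V := 'cV[C]_N.

Definition bf (x y : V) (A : M) : C := ((map_mx Num.conj x)^T *m A *m y) ord0 ord0.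

Lemma bfE x y A : bf x y A = \sum_j \sum_l (Num.conj (x j 0) * y l 0) * A j l.
Proof.
rewrite /bf mxE; under eq_bigr => l _ do rewrite mxE big_distrl /=.
rewrite exchange_big /=; apply: eq_bigr => j _; apply: eq_bigr => l _.
by rewrite !mxE mulrAC mulrC !mulrA.
Qed.

Lemma bfDm x y A B : bf x y (A + B) = bf x y A + bf x y B.
Proof. by rewrite /bf mulmxDr mulmxDl mxE. Qed.
Lemma bfNm x y A : bf x y (- A) = - bf x y A.
Proof. by rewrite /bf mulmxN mulNmx mxE. Qed.
Lemma bfBm x y A B : bf x y (A - B) = bf x y A - bf x y B.
Proof. by rewrite bfDm bfNm. Qed.
Lemma bfZm x y c A : bf x y (c *: A) = c * bf x y A.
Proof. by rewrite /bf -scalemxAr -scalemxAl mxE. Qed.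
Lemma bf0m x y : bf x y 0 = 0.
Proof. by rewrite /bf mulmx0 mul0mx mxE. Qed.
Lemma bfsumm I (r : seq I) (P : pred I) (F : I -> M) x y :
  bf x y (\sum_(i <- r | P i) F i) = \sum_(i <- r | P i) bf x y (F i).
Proof.
elim/big_rec2: _ => [|i a B _ <-]; first by rewrite bf0m.
by rewrite bfDm.
Qed.

Lemma bfDl x y z A : bf (x + y) z A = bf x z A + bf y z A.
Proof.
rewrite !bfE -big_split; apply: eq_bigr => j _; rewrite -big_split.
by apply: eq_bigr => l _; rewrite !mxE rmorphD !mulrDl.
Qed.
Lemma bfDr x y z A : bf z (x + y) A = bf z x A + bf z y A.
Proof.
rewrite !bfE -big_split; apply: eq_bigr => j _; rewrite -big_split.
by apply: eq_bigr => l _; rewrite !mxE !mulrDr !mulrDl.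
Qed.
Lemma bfZl c x y A : bf (c *: x) y A = Num.conj c * bf x y A.
Proof.
rewrite !bfE mulr_sumr; apply: eq_bigr => j _; rewrite mulr_sumr.
by apply: eq_bigr => l _; rewrite !mxE rmorphM !mulrA.
Qed.
Lemma bfZr c x y A : bf x (c *: y) A = c * bf x y A.
Proof.
rewrite !bfE mulr_sumr; apply: eq_bigr => j _; rewrite mulr_sumr.
by apply: eq_bigr => l _; rewrite !mxE; ring.
Qed.

Lemma conj_i : Num.conj ('i : C) = - 'i.
Proof. change (Complex (0:R) (-1) = Complex (-0) (-1)). by rewrite oppr0. Qed.

Lemma i_sq : ('i : C) * 'i = -1.
Proof. change (Complex (0 * 0 - 1 * 1) (0 * 1 + 1 * 0) = Complex (-1) (-0) :> R[i]). by rewrite !mul0r mulr0 mulr1 add0r oppr0 addr0. Qed.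

Lemma polar x y A :
  2%:R * bf x y A =
  (bf (x + y) (x + y) A - bf x x A - bf y y A)
  - 'i * (bf (x + 'i *: y) (x + 'i *: y) A - bf x x A - bf y y A).
Proof.
rewrite !bfDl !bfDr !bfZl !bfZr conj_i.
set a := bf x y A; set b := bf y x A; set p := bf x x A; set q := bf y y A.
apply/eqP; rewrite -subr_eq0.
have -> : 2%:R * a - (p + a + (b + q) - p - q - 'i * (p + 'i * a + (- 'i * b + - 'i * ('i * q)) - p - q))
  = ('i * 'i + 1) * (a - b - 'i * q) by ring.
by rewrite i_sq addNr mul0r.
Qed.

Lemma bf_delta j l A : bf (delta_mx j 0) (delta_mx l 0) A = A j l.
Proof.
rewrite bfE (bigD1 j) //= [X in _ + X]big1 => [|j' /negbTE hj]; last first.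
  by apply: big1 => l' _; rewrite !mxE hj /= rmorph0 !mul0r.
rewrite addr0 (bigD1 l) //= [X in _ + X]big1 => [|l' /negbTE hl]; last first.
  by rewrite !mxE hl /= mulr0 mul0r.
by rewrite !mxE !eqxx /= rmorph1 !mul1r addr0.
Qed.

Lemma bf_zero_mx B : (forall v, bf v v B = 0) -> B = 0.
Proof.
move=> h; apply/matrixP => j l; rewrite mxE.
have : 2%:R * B j l = 0 by rewrite -bf_delta polar !h !subrr mulr0 subrr.
by move/eqP; rewrite mulf_eq0 pnatr_eq0 /= => /eqP.
Qed.

End Basics.
Section Psd.
Variable R : realType.
Variable n : nat.
Local Notation N := (2 ^ n)%N.
Local Notation C := R[i].
Local Notation M := 'M[C]_N.
Local Notation V := 'cV[C]_N.

Lemma normc_ge (z : C) : `|cRe z| <= normc z /\ `|cIm z| <= normc z.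
Proof.
case: z => a b /=; rewrite -!sqrtr_sqr; split; apply: ler_wsqrtr.
  by rewrite lerDl sqr_ge0.
by rewrite lerDr sqr_ge0.
Qed.

Lemma trB (A B : M) : \tr (A - B) = \tr A - \tr B.
Proof. by rewrite raddfB. Qed.

Lemma psdP (A : M) : psd A <-> forall v, 0 <= bf v v A.
Proof. by []. Qed.

Lemma psd_tr (A : M) : psd A -> 0 <= \tr A.
Proof.
move=> h; rewrite /mxtrace; apply: sumr_ge0 => j _.
by rewrite -bf_delta; apply: h.
Qed.

Lemma psd0 : psd (0 : M).
Proof. by move=> v; rewrite -/(bf v v 0) bf0m. Qed.

Lemma psdD (A B : M) : psd A -> psd B -> psd (A + B).
Proof. by move=> hA hB v; rewrite -/(bf v v _) bfDm addr_ge0 //; [apply: hA|apply: hB]. Qed.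

Lemma psdZ (c : C) (A : M) : 0 <= c -> psd A -> psd (c *: A).
Proof. by move=> hc hA v; rewrite -/(bf v v _) bfZm mulr_ge0 //; apply: hA. Qed.

Lemma psd_sum I (r : seq I) (P : pred I) (F : I -> M) :
  (forall i, P i -> psd (F i)) -> psd (\sum_(i <- r | P i) F i).
Proof.
move=> h; elim/big_rec: _ => [|i B Pi hB]; first exact: psd0.
by apply: psdD => //; apply: h.
Qed.

Lemma psd_sub0 (A : M) : psd (A - 0).
Abort.

Lemma lowner_refl (A : M) : lowner A A.
Proof. by rewrite /lowner subrr; apply: psd0. Qed.

Lemma lowner_trans (A B D : M) : lowner A B -> lowner B D -> lowner A D.
Proof.
rewrite /lowner => h1 h2; have -> : D - A = (D - B) + (B - A) by rewrite addrA subrK.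
exact: psdD.
Qed.

Lemma lowner_tr (A B : M) : lowner A B -> \tr A <= \tr B.
Proof. by move=> /psd_tr; rewrite trB subr_ge0. Qed.

Lemma pdo_le (A B : M) : psd A -> lowner A B -> pdo B -> pdo A.
Proof.
move=> hA hAB [_ hB]; split => //.
exact: le_trans (lowner_tr hAB) hB.
Qed.

Lemma pdo_psd (A : M) : pdo A -> psd A.
Proof. by case. Qed.

Lemma bf_real (A : M) v : psd A -> bf v v A = (cRe (bf v v A))%:C.
Proof.
move=> /(_ v); rewrite -/(bf v v A); case: (bf v v A) => a b.
by rewrite lecE /= => /andP [/eqP -> _].
Qed.

Lemma ge0_closed (w : C) :
  (forall e : R, 0 < e -> exists z : C, 0 <= z /\ `|z - w| < e%:C) -> 0 <= w.
Proof.
case: w => a b h; rewrite lecE /=.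
have hb : b = 0.
  apply/eqP; apply/negPn/negP => hb.
  have [z [hz hn]] := h `|b| (ltac:(by rewrite normr_gt0)).
  move: hz hn; case: z => c d; rewrite lecE /= => /andP [/eqP hd hc].
  rewrite ltcR; set u := (c +i* d) - (a +i* b).
  have [_ hi] := normc_ge u.
  have : cIm u = - b by rewrite /u /= hd add0r.
  by move=> e; rewrite e normrN in hi => /(le_lt_trans hi); rewrite ltxx.
rewrite hb eqxx /=; rewrite leNgt; apply/negP => ha.
have [z [hz hn]] := h (- a) (ltac:(by rewrite oppr_gt0)).
move: hz hn; case: z => c d; rewrite lecE /= => /andP [/eqP hd hc].
rewrite ltcR; set u := (c +i* d) - (a +i* b).
have [hr _] := normc_ge u.
have : cRe u = c - a by [].
move=> e; rewrite e in hr => hl.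
have := le_lt_trans hr hl; rewrite ltNge => /negP; apply.
apply: le_trans (ler_norm _); by rewrite lerDr.
Qed.

End Psd.
Section Cvg.
Variable R : realType.
Variable n : nat.
Local Notation N := (2 ^ n)%N.
Local Notation C := R[i].
Local Notation M := 'M[C]_N.
Local Notation V := 'cV[C]_N.

Lemma normc_ge0 (z : C) : 0 <= normc z.
Proof. by have [h _] := normc_ge z; apply: le_trans h. Qed.

Lemma rc_sum I (r : seq I) (P : pred I) (F : I -> R) :
  (\sum_(i <- r | P i) F i)%:C = \sum_(i <- r | P i) (F i)%:C.
Proof. by elim/big_rec2: _ => // i a b _ <-; rewrite rmorphD. Qed.

Lemma rcM (a b : R) : (a * b)%:C = a%:C * b%:C.
Proof. by rewrite rmorphM. Qed.

Lemma lin_approx (u : nat -> M) (L : M) (c : 'I_N -> 'I_N -> C) :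
  mx_cvg u L -> forall e : R, 0 < e -> exists K, forall k, (K <= k)%N ->
  `|\sum_j \sum_l c j l * u k j l - \sum_j \sum_l c j l * L j l| < e%:C.
Proof.
move=> hu e he.
pose s : R := \sum_j \sum_l normc (c j l).
have hs : 0 <= s by apply: sumr_ge0 => j _; apply: sumr_ge0 => l _; apply: normc_ge0.
have hs1 : 0 < s + 1 by apply: ltr_wpDl.
have he' : 0 < e / (s + 1) by apply: divr_gt0.
have [K hK] := hu _ he'; exists K => k hk.
have -> : \sum_j \sum_l c j l * u k j l - \sum_j \sum_l c j l * L j l =
   \sum_j \sum_l c j l * (u k j l - L j l).
  rewrite -sumrB; apply: eq_bigr => j _; rewrite -sumrB.
  by apply: eq_bigr => l _; rewrite mulrBr.
apply: (le_lt_trans (ler_norm_sum _ _ _)).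
apply: (@le_lt_trans _ _ (\sum_j \sum_l `|c j l| * (e / (s + 1))%:C)).
  apply: ler_sum => j _; apply: le_trans (ler_norm_sum _ _ _) _.
  apply: ler_sum => l _; rewrite normrM; apply: ler_wpM2l => //.
  exact: ltW (hK k hk j l).
have -> : \sum_j \sum_l `|c j l| * (e / (s + 1))%:C = (s * (e / (s + 1)))%:C.
  rewrite [RHS]rcM /s rc_sum mulr_suml; apply: eq_bigr => j _.
  by rewrite rc_sum mulr_suml.
by rewrite ltcR mulrA ltr_pdivrMr // mulrDr mulr1 mulrC ltrDl.
Qed.

Lemma bfE' x y (A : M) : bf x y A = \sum_j \sum_l (Num.conj (x j 0) * y l 0) * A j l.
Proof. exact: bfE. Qed.

Lemma psd_closed (u : nat -> M) (L : M) K0 :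
  mx_cvg u L -> (forall k, (K0 <= k)%N -> psd (u k)) -> psd L.
Proof.
move=> hu hp v; rewrite -/(bf v v L); apply: ge0_closed => e he.
have [K hK] := lin_approx (fun j l => Num.conj (v j 0) * v l 0) hu he.
exists (bf v v (u (maxn K K0))); split.
  by apply: hp; rewrite leq_maxr.
by rewrite !bfE; apply: hK; rewrite leq_maxl.
Qed.

Lemma tr_closed (u : nat -> M) (L : M) :
  mx_cvg u L -> (forall k, \tr (u k) <= 1) -> \tr L <= 1.
Proof.
move=> hu ht; rewrite -subr_ge0; apply: ge0_closed => e he.
have [K hK] := lin_approx (fun j l => (j == l)%:R) hu he.
exists (1 - \tr (u K)); split; first by rewrite subr_ge0.
have trE : forall A : M, \tr A = \sum_j \sum_l (j == l)%:R * A j l.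
  move=> A; rewrite /mxtrace; apply: eq_bigr => j _.
  rewrite (bigD1 j) //= eqxx mul1r big1 ?addr0 // => l /negbTE.
  by rewrite eq_sym => ->; rewrite mul0r.
have -> : (1 - \tr (u K)) - (1 - \tr L) = \tr L - \tr (u K) by ring.
rewrite distrC !trE; exact: hK.
Qed.

Lemma mx_cvgBl (u : nat -> M) (L B : M) :
  mx_cvg u L -> mx_cvg (fun k => B - u k) (B - L).
Proof.
move=> hu e he; have [K hK] := hu e he; exists K => k hk i j.
have -> : (B - u k) i j - (B - L) i j = - (u k i j - L i j) by rewrite !mxE; ring.
by rewrite normrN; apply: hK.
Qed.

Lemma mx_cvgBr (u : nat -> M) (L B : M) :
  mx_cvg u L -> mx_cvg (fun k => u k - B) (L - B).
Proof.
move=> hu e he; have [K hK] := hu e he; exists K => k hk i j.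
have -> : (u k - B) i j - (L - B) i j = u k i j - L i j by rewrite !mxE; ring.
by apply: hK.
Qed.

Lemma mx_cvgS (u : nat -> M) (L : M) :
  mx_cvg u L -> mx_cvg (fun k => u k.+1) L.
Proof.
move=> hu e he; have [K hK] := hu e he; exists K => k hk i j.
by apply: hK; apply: leqW.
Qed.

End Cvg.
Section Mono.
Variable R : realType.
Variable n : nat.
Local Notation N := (2 ^ n)%N.
Local Notation C := R[i].
Local Notation M := 'M[C]_N.
Local Notation V := 'cV[C]_N.

Lemma rcB (a b : R) : (a - b)%:C = a%:C - b%:C.
Proof. by rewrite rmorphB. Qed.

Lemma norm_rc (a : R) : `|a%:C| = `|a|%:C.
Proof. by rewrite normc_def /= expr0n /= addr0 sqrtr_sqr. Qed.

Lemma norm_i : `|'i : C| = 1.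
Proof. by rewrite normc_def /= expr0n /= add0r expr1n sqrtr1. Qed.

Lemma norm_bound (a b c d T : C) :
  `|a| < T -> `|b| < T -> `|c| < T -> `|d| < T ->
  `|2%:R^-1 * ((a - b - c) - 'i * (d - b - c))| < T + T + T.
Proof.
move=> ha hb hc hd.
have h1 : `|a - b - c| < T + T + T.
  apply: le_lt_trans (ler_normB _ _) _; apply: ltrD => //.
  by apply: le_lt_trans (ler_normB _ _) _; apply: ltrD.
have h2 : `|d - b - c| < T + T + T.
  apply: le_lt_trans (ler_normB _ _) _; apply: ltrD => //.
  by apply: le_lt_trans (ler_normB _ _) _; apply: ltrD.
have h3 : `|(a - b - c) - 'i * (d - b - c)| < (T + T + T) + (T + T + T).
  apply: le_lt_trans (ler_normB _ _) _; rewrite normrM norm_i mul1r.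
  exact: ltrD.
rewrite normrM normfV normr_nat.
have -> : T + T + T = 2%:R^-1 * ((T + T + T) + (T + T + T)).
  by field.
by rewrite ltr_pM2l // invr_gt0 ltr0n.
Qed.

Lemma diff_form (b1 b2 b3 b4 L1 L2 L3 L4 : C) :
  2%:R^-1 * (b1 - b2 - b3 - 'i * (b4 - b2 - b3)) -
  2%:R^-1 * (L1 - L2 - L3 - 'i * (L4 - L2 - L3)) =
  2%:R^-1 * (((b1 - L1) - (b2 - L2) - (b3 - L3)) - 'i * ((b4 - L4) - (b2 - L2) - (b3 - L3))).
Proof. by ring. Qed.

Lemma e3 (e : R) : e%:C = (e / 3%:R)%:C + (e / 3%:R)%:C + (e / 3%:R)%:C.
Proof.
rewrite -!rmorphD; congr (_%:C).
by field.
Qed.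

End Mono.
Lemma fin_unif (T : finType) (P : T -> nat -> Prop) :
  (forall t, exists K, forall k, (K <= k)%N -> P t k) ->
  exists K, forall t k, (K <= k)%N -> P t k.
Proof.
move=> h.
have : forall s : seq T, exists K, forall t, t \in s -> forall k, (K <= k)%N -> P t k.
  elim => [|t s [K2 IH]]; first by exists 0%N.
  have [K1 h1] := h t; exists (maxn K1 K2) => t'; rewrite in_cons => /orP [/eqP -> | ht] k.
    by rewrite geq_max => /andP [hk _]; apply: h1.
  by rewrite geq_max => /andP [_ hk]; apply: IH.
move=> /(_ (enum T)) [K hK]; exists K => t k; apply: hK; by rewrite mem_enum.
Qed.

Section MonoMain.
Variable R : realType.
Variable n : nat.
Local Notation N := (2 ^ n)%N.
Local Notation C := R[i].
Local Notation M := 'M[C]_N.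
Local Notation V := 'cV[C]_N.
Variables (rho : nat -> PDO R n) (sigma : PDO R n).
Hypothesis hinc : forall i, lowner (proj1_sig (rho i)) (proj1_sig (rho i.+1)).
Hypothesis hlub : is_lub_pdo rho sigma.
Local Notation r k := (proj1_sig (rho k)).
Local Notation s := (proj1_sig sigma).

Lemma r_mono i k : (i <= k)%N -> lowner (r i) (r k).
Proof.
elim: k => [|k IH]; first by rewrite leqn0 => /eqP ->; apply: lowner_refl.
rewrite leq_eqVlt => /orP [/eqP -> | hik]; first exact: lowner_refl.
exact: lowner_trans (IH hik) (hinc k).
Qed.

Definition Lf (w : V) : R := sup (range (fun k => cRe (bf w w (r k)))).

Lemma Lf_cvg w : forall e : R, 0 < e -> exists K, forall k, (K <= k)%N ->
  `|bf w w (r k) - (Lf w)%:C| < e%:C.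
Proof.
move=> e he.
pose q := fun k => cRe (bf w w (r k)).
have qmono : forall i k, (i <= k)%N -> q i <= q k.
  move=> i k hik; have := r_mono hik w; rewrite -/(bf w w _) bfBm subr_ge0.
  by rewrite lecE => /andP [_].
have qub : forall k, q k <= cRe (bf w w s).
  move=> k; have := (hlub.1 k) w; rewrite -/(bf w w _) bfBm subr_ge0 lecE.
  by move=> /andP [_].
have hs : has_sup (range q).
  split; first by exists (q 0%N); exists 0%N.
  by exists (cRe (bf w w s)) => x [k _ <-]; apply: qub.
have [x [K _ <-] hK] := sup_adherent he hs.
exists K => k hk.
rewrite (bf_real w (pdo_psd (proj2_sig (rho k)))) -rcB norm_rc ltcR.
have h1 := qmono _ _ hk.
have h2 : q k <= sup (range q) by apply: sup_upper_bound => //; exists k.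
change (Lf w) with (sup (range q)); change (cRe (bf w w (r k))) with (q k).
rewrite distrC ger0_norm ?subr_ge0 //.
move: hK h1 h2; set S := sup (range q); set a := q K; set b := q k.
move=> *; lra.
Qed.

Definition ej (j : 'I_N) : V := delta_mx j 0.
Definition Lc w : C := (Lf w)%:C.
Definition M0 : M := \matrix_(j, l) (2%:R^-1 * ((Lc (ej j + ej l) - Lc (ej j) - Lc (ej l))
   - 'i * (Lc (ej j + 'i *: ej l) - Lc (ej j) - Lc (ej l)))).

Lemma M0_cvg : mx_cvg (fun k => r k) M0.
Proof.
move=> e he.
have he3 : 0 < e / 3%:R by rewrite divr_gt0 // ltr0n.
have hu : forall t : ('I_N * 'I_N)%type, exists K, forall k, (K <= k)%N ->
   `|r k t.1 t.2 - M0 t.1 t.2| < e%:C.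
  case=> j l /=.
  have [K1 h1] := Lf_cvg (ej j + ej l) he3.
  have [K2 h2] := Lf_cvg (ej j) he3.
  have [K3 h3] := Lf_cvg (ej l) he3.
  have [K4 h4] := Lf_cvg (ej j + 'i *: ej l) he3.
  exists (maxn (maxn K1 K2) (maxn K3 K4)) => k.
  rewrite !geq_max => /andP [/andP [k1 k2] /andP [k3 k4]].
  have e1 : r k j l = 2%:R^-1 * (2%:R * r k j l).
    by rewrite mulrA mulVf ?mul1r // pnatr_eq0.
  rewrite e1 -bf_delta polar mxE.
  rewrite diff_form e3.
  by apply: norm_bound; [apply: h1|apply: h2|apply: h3|apply: h4].
have [K hK] := fin_unif hu.
exists K => k hk j l; exact: (hK (j, l) k hk).
Qed.

Lemma r_psd k : psd (r k).
Proof. exact: pdo_psd (proj2_sig (rho k)). Qed.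

Lemma M0_pdo : pdo M0.
Proof.
split.
  by apply: (@psd_closed _ _ _ _ 0%N M0_cvg) => k _; apply: r_psd.
apply: (tr_closed M0_cvg) => k; exact: (proj2_sig (rho k)).2.
Qed.

Lemma mono_cvg : mx_cvg (fun k => r k) s.
Proof.
pose Mp : PDO R n := exist _ M0 M0_pdo.
have up : forall i, lowner (r i) M0.
  move=> i; rewrite /lowner.
  apply: (@psd_closed _ _ _ _ i (mx_cvgBr (r i) M0_cvg)) => k hik.
  exact: r_mono.
have h1 : psd (M0 - s) := hlub.2 Mp up.
have h2 : psd (s - M0).
  by apply: (@psd_closed _ _ _ _ 0%N (mx_cvgBl s M0_cvg)) => k _; apply: hlub.1.
have : M0 - s = 0.
  apply: bf_zero_mx => v; apply/eqP; rewrite eq_le.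
  have := h2 v; rewrite -/(bf _ _ _) -opprB bfNm oppr_ge0 => ->.
  exact: h1 v.
move/eqP; rewrite subr_eq0 => /eqP <-; exact: M0_cvg.
Qed.

End MonoMain.
Section PdoOps.
Variable R : realType.
Variable n : nat.
Local Notation N := (2 ^ n)%N.
Local Notation C := R[i].
Local Notation M := 'M[C]_N.

Lemma pdo_diff (A B : M) : pdo A -> pdo B -> lowner A B -> pdo (B - A).
Proof.
move=> [hA tA] [hB tB] hAB; split => //.
rewrite trB; apply: le_trans tB; rewrite lerBlDr lerDl; exact: psd_tr.
Qed.

Lemma pdo_conv (A B : M) (t : R) : pdo A -> pdo B -> 0 <= t <= 1 ->
  pdo (t%:C *: A + (1 - t)%:C *: B).
Proof.
move=> [hA tA] [hB tB] /andP [t0 t1].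
have t0' : 0 <= t%:C by rewrite ler0c.
have t1' : 0 <= (1 - t)%:C by rewrite ler0c subr_ge0.
split; first by apply: psdD; apply: psdZ.
rewrite mxtraceD !mxtraceZ.
apply: le_trans (_ : t%:C * 1 + (1 - t)%:C * 1 <= 1).
  by apply: lerD; apply: ler_wpM2l.
by rewrite !mulr1 -rmorphD addrC subrK.
Qed.

Lemma pdo_scale_le (A S : M) (c : R) : psd A -> 0 <= c -> lowner (c%:C *: A) S -> pdo S ->
  pdo (c%:C *: A).
Proof. by move=> hA hc hl hS; apply: pdo_le hl hS; apply: psdZ => //; rewrite ler0c. Qed.

Lemma scale_inv (A : M) (c : R) : c != 0 -> (c^-1)%:C *: (c%:C *: A) = A.
Proof. by move=> hc; rewrite scalerA -rcM mulVf // scale1r. Qed.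

End PdoOps.

Definition mkP (R : realType) (n : nat) (A : 'M[R[i]]_(2 ^ n)) (h : pdo A) : PDO R n :=
  exist _ A h.

Definition fam2 (R : realType) (n : nat) (r1 r2 : PDO R n) : nat -> PDO R n :=
  fun i => if i is 0%N then r1 else r2.

Lemma wsum2 (R : realType) (n : nat) (x : nat -> R) (r1 r2 : PDO R n) (S : 'M[R[i]]_(2 ^ n)) :
  S = (x 0%N)%:C *: proj1_sig r1 + (x 1%N)%:C *: proj1_sig r2 ->
  wsum_is (Some 1%N) x (fam2 r1 r2) S.
Proof. by move=> ->; rewrite /= big_ord_recr big_ord1 /=. Qed.

Lemma wsum1 (R : realType) (n : nat) (x : nat -> R) (r : PDO R n) (S : 'M[R[i]]_(2 ^ n)) :
  S = (x 0%N)%:C *: proj1_sig r -> wsum_is (Some 0%N) x (fun _ => r) S.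
Proof. by move=> ->; rewrite /= big_ord1. Qed.
Section Main.
Variable R : realType.
Variable n : nat.
Variable d : Order.disp_t.
Variable A : porderType d.
Variable alpha : set (PDO R n) -> A.
Variable gamma : A -> set (PDO R n).
Hypothesis hge : galois_embedding alpha gamma.
Local Notation N := (2 ^ n)%N.
Local Notation C := R[i].
Local Notation M := 'M[C]_N.

Lemma mem_gamma a (S : PDO R n) : gamma a S <-> (alpha [set S] <= a)%O.
Proof.
have [[_ [_ gc]] _] := hge; rewrite -gc; split.
  by move=> h y ->.
by move=> h; apply: h.
Qed.

Lemma ws_sc : well_structured alpha gamma -> sum_closed gamma.
Proof.
move=> [_ hws] a K x rho S hx hS; have [ub lst] := hws K x rho S hx hS.
split.
  move=> /mem_gamma hSa i hi; apply/mem_gamma; apply: le_trans hSa.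
  by apply: ub; exists i.
move=> h; apply/mem_gamma; apply: lst => y [i hi ->]; apply/mem_gamma; exact: h.
Qed.

Lemma sc_ws : sum_closed gamma -> well_structured alpha gamma.
Proof.
move=> hsc; split => // K x rho S hx hS; split.
  move=> y [i hi ->]; apply/mem_gamma.
  by apply: (hsc _ K x rho S hx hS).1 _ i hi; apply/mem_gamma.
move=> z hz; apply/mem_gamma; apply: (hsc z K x rho S hx hS).2 => i hi.
by apply/mem_gamma; apply: hz; exists i.
Qed.

Section SC3.
Hypothesis hsc : sum_closed gamma.

Lemma sc_split a (r1 r2 S : PDO R n) :
  proj1_sig S = proj1_sig r1 + proj1_sig r2 ->
  (gamma a S <-> gamma a r1 /\ gamma a r2).
Proof.
move=> e.
have hw : wsum_is (Some 1%N) (fun _ => 1) (fam2 r1 r2) (proj1_sig S).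
  by apply: wsum2; rewrite e !scale1r.
have := hsc a (x := fun _ => 1) (S := S) (fun i _ => ltr01) hw.
move=> [h1 h2]; split.
  by move=> /h1 h; split; [apply: (h 0%N)|apply: (h 1%N)].
by move=> [g1 g2]; apply: h2 => -[|i] _.
Qed.

Lemma sc_single a (r S : PDO R n) (c : R) : 0 < c ->
  proj1_sig S = c%:C *: proj1_sig r -> (gamma a S <-> gamma a r).
Proof.
move=> hc e.
have hw : wsum_is (Some 0%N) (fun _ => c) (fun _ => r) (proj1_sig S) by apply: wsum1.
have [h1 h2] := hsc a (x := fun _ => c) (S := S) (fun i _ => hc) hw.
split; first by move=> /h1 h; exact: (h 0%N).
by move=> h; apply: h2.
Qed.

Lemma sc_convex a : convex_pdo (gamma a).
Proof.
move=> rho sigma tau t hr hs /andP [t0 t1] e.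
have [t00|tn0] := eqVneq t 0.
  apply/(sc_single (r := sigma) a ltr01); last exact: hs.
  by rewrite e t00 scale0r add0r subr0.
have [t11|tn1] := eqVneq t 1.
  apply/(sc_single (r := rho) a ltr01); last exact: hr.
  by rewrite e t11 subrr scale0r addr0.
have tp : 0 < t by rewrite lt_neqAle eq_sym tn0.
have tq : 0 < 1 - t by rewrite subr_gt0 lt_neqAle tn1.
have hw : wsum_is (Some 1%N) (fun i => if i is 0%N then t else 1 - t) (fam2 rho sigma) (proj1_sig tau).
  by apply: wsum2.
have [_ h2] := hsc a (x := fun i => if i is 0%N then t else 1 - t) (S := tau) (fun i _ => if i is 0%N return 0 < (if i is 0%N then t else 1 - t) then tp else tq) hw.
by apply: h2 => -[|i] _.
Qed.

Lemma sc_scale a : scale_closed_pdo (gamma a).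
Proof.
move=> rho tau x hr hx e.
by apply/(sc_single (r := rho) a hx e).
Qed.

Lemma sc_down a : down_closed_pdo (gamma a).
Proof.
move=> rho sigma hl hs.
have hd := pdo_diff (proj2_sig rho) (proj2_sig sigma) hl.
have e : proj1_sig sigma = proj1_sig rho + proj1_sig (mkP hd) by rewrite /= addrC subrK.
by have [h _] := sc_split a e; have [] := h hs.
Qed.

Definition dfam (rho : nat -> PDO R n)
  (hinc : forall i, lowner (proj1_sig (rho i)) (proj1_sig (rho i.+1))) : nat -> PDO R n :=
  fun i => match i with
  | 0%N => rho 0%N
  | k.+1 => mkP (pdo_diff (proj2_sig (rho k)) (proj2_sig (rho k.+1)) (hinc k))
  end.

Lemma sc_ocpo a : omega_cpo_pdo (gamma a).
Proof.
move=> rho sigma hr hinc hlub.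
pose D := dfam hinc.
have part : forall m, \sum_(i < m.+1) (1 : R)%:C *: proj1_sig (D i) = proj1_sig (rho m).
  elim=> [|m IH]; first by rewrite big_ord1 scale1r.
  by rewrite big_ord_recr /= IH scale1r addrC subrK.
have hw : wsum_is None (fun _ => 1) D (proj1_sig sigma).
  move=> e he; have [K hK] := mono_cvg hinc hlub he.
  exists K.+1 => -[|k] // hk i j; rewrite part; exact: hK.
have [_ h2] := hsc a (x := fun _ => 1) (S := sigma) (fun i _ => ltr01) hw.
apply: h2 => -[|k] _ //=.
have e : proj1_sig (rho k.+1) = proj1_sig (rho k) + proj1_sig (D k.+1) by rewrite /= addrC subrK.
by have [h _] := sc_split a e; have [] := h (hr k.+1).
Qed.

End SC3.
End Main.
Section Tsum.
Variable R : realType.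
Variable n : nat.
Local Notation N := (2 ^ n)%N.
Local Notation C := R[i].
Local Notation M := 'M[C]_N.

Definition Tsum (x : nat -> R) (rho : nat -> PDO R n) (m : nat) : M :=
  \sum_(i < m) (x i)%:C *: proj1_sig (rho i).

Variables (x : nat -> R) (rho : nat -> PDO R n).
Local Notation T := (Tsum x rho).
Local Notation r i := (proj1_sig (rho i)).

Lemma T_rec m : T m.+1 = T m + (x m)%:C *: r m.
Proof. by rewrite /Tsum big_ord_recr. Qed.

Lemma T_psd m : (forall i, (i < m)%N -> 0 < x i) -> psd (T m).
Proof.
move=> hx; apply: psd_sum => i _; apply: psdZ; last exact: pdo_psd (proj2_sig (rho i)).
by rewrite ler0c; apply: ltW; apply: hx.
Qed.

Lemma T_mono m m' : (forall i, (i < m')%N -> 0 < x i) -> (m <= m')%N -> lowner (T m) (T m').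
Proof.
move=> hx; elim: m' hx => [|k IH] hx; first by rewrite leqn0 => /eqP ->; apply: lowner_refl.
rewrite leq_eqVlt => /orP [/eqP -> | hik]; first exact: lowner_refl.
apply: lowner_trans (IH _ hik) _ => [i hi|]; first by apply: hx; apply: ltnW.
rewrite /lowner T_rec addrC addKr; apply: psdZ; last exact: pdo_psd (proj2_sig (rho k)).
by rewrite ler0c; apply: ltW; apply: hx.
Qed.

Lemma T_le_S K (S : M) : wsum_is K x rho S -> (forall i, in_fam K i -> 0 < x i) ->
  forall m, in_fam K m -> lowner (T m.+1) S.
Proof.
case: K => [k|] /= hS hx m hm.
  rewrite hS; apply: (T_mono (m' := k.+1)) => // i hi; exact: hx.
rewrite /lowner; apply: (@psd_closed _ _ _ _ m.+1 (mx_cvgBr (T m.+1) hS)) => k hk.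
by apply: T_mono => // i _; apply: hx.
Qed.

Lemma term_le K (S : M) : wsum_is K x rho S -> (forall i, in_fam K i -> 0 < x i) ->
  forall m, in_fam K m -> lowner ((x m)%:C *: r m) S.
Proof.
move=> hS hx m hm; have := T_le_S hS hx hm; rewrite /lowner T_rec.
have -> : S - (x m)%:C *: r m = (S - (T m + (x m)%:C *: r m)) + T m.
  by rewrite opprD addrA addrAC subrK.
move=> h; apply: psdD => //; apply: T_psd => i hi; apply: hx.
by case: (K) hm => //= k hk; apply: leq_trans (ltnW hi) hk.
Qed.

Lemma fin_in (P : set (PDO R n)) : convex_pdo P -> scale_closed_pdo P ->
  forall m, (forall i, (i <= m)%N -> 0 < x i /\ P (rho i)) ->
  (forall j, (j <= m)%N -> \tr (T j.+1) <= 1) ->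
  forall tau : PDO R n, proj1_sig tau = T m.+1 -> P tau.
Proof.
move=> hc hs; elim=> [|m IH] hi ht tau e.
  have [x0 p0] := hi 0%N (leqnn 0).
  by apply: (hs (rho 0%N) tau (x 0%N)) => //; rewrite e /Tsum big_ord1.
have hpT : forall j, (j <= m.+1)%N -> pdo (T j.+1).
  move=> j hj; split; last exact: ht.
  by apply: T_psd => i hij; have [] := hi i (leq_trans (hij : (i <= j)%N) hj).
pose t1 := mkP (hpT m (leqnSn m)).
have P1 : P t1.
  apply: IH => //; first by move=> i hm; apply: hi; apply: leqW.
  by move=> j hj; apply: ht; apply: leqW.
have [xp Pr] := hi m.+1 (leqnn _).
have p2 : pdo ((x m.+1)%:C *: r m.+1).
  apply: pdo_le (hpT m.+1 (leqnn _)).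
    by apply: psdZ; [rewrite ler0c; apply: ltW | exact: pdo_psd (proj2_sig (rho m.+1))].
  rewrite /lowner T_rec addrK; exact: proj1 (hpT m (leqnSn m)).
pose t2 := mkP p2.
have P2 : P t2 by apply: (hs (rho m.+1) t2 (x m.+1)).
have h01 : 0 <= (2%:R^-1 : R) <= 1.
  by apply/andP; split; [rewrite invr_ge0 ler0n | rewrite invf_le1 ?ltr0n // ler1n].
pose U := mkP (pdo_conv (proj2_sig t1) (proj2_sig t2) h01).
have PU : P U by apply: (hc t1 t2 U 2%:R^-1).
apply: (hs U tau 2%:R PU); first by rewrite ltr0n.
rewrite e T_rec /= scalerDr !scalerA -!rcM.
have -> : (2%:R * 2%:R^-1 : R) = 1 by rewrite mulfV // pnatr_eq0.
have -> : (2%:R * (1 - 2%:R^-1) : R) = 1 by field.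
rewrite mul1r; congr (_ + _); symmetry; exact: scale1r.
Qed.

End Tsum.

Section Main3.
Variable R : realType.
Variable n : nat.
Variable d : Order.disp_t.
Variable A : porderType d.
Variable gamma : A -> set (PDO R n).

Lemma c3_sc : (forall a : A, [/\ convex_pdo (gamma a), omega_cpo_pdo (gamma a),
             down_closed_pdo (gamma a) & scale_closed_pdo (gamma a)]) -> sum_closed gamma.
Proof.
move=> h3 a K x rho S hx hS; have [hc ho hd hs] := h3 a; split.
  move=> hSa i hi.
  have hp : pdo ((x i)%:C *: proj1_sig (rho i)).
    apply: pdo_scale_le (proj2_sig S); first exact: pdo_psd (proj2_sig (rho i)).
      exact: ltW (hx i hi).
    exact: term_le hS hx i hi.
  pose tP := mkP hp.
  have htP : gamma a tP by apply: (hd tP S) => //; exact: term_le hS hx i hi.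
  apply: (hs tP (rho i) (x i)^-1 htP); first by rewrite invr_gt0; apply: hx.
  by rewrite /= scale_inv // gt_eqF //; apply: hx.
move=> hall.
have htr : forall j, in_fam K j -> \tr (Tsum x rho j.+1) <= 1.
  move=> j hj; apply: le_trans (lowner_tr (T_le_S hS hx hj)) _.
  exact: (proj2_sig S).2.
have hpT : forall j, in_fam K j -> pdo (Tsum x rho j.+1).
  move=> j hj; split; last exact: htr.
  apply: T_psd => i hij; apply: hx.
  by case: (K) hj => //= k hk; apply: leq_trans (hij : (i <= j)%N) hk.
case: K hx hS hall htr hpT => [k|] hx hS hall htr hpT.
  apply: (fin_in (x := x) (rho := rho) hc hs (m := k) _ htr (tau := S) hS).
  by move=> i hi; split; [apply: hx | apply: hall].
pose U m := mkP (hpT m I).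
apply: (ho U S).
- move=> m; apply: (fin_in (x := x) (rho := rho) hc hs (m := m) _ (fun j _ => htr j I) (tau := U m) erefl).
  by move=> i _; split; [apply: hx | apply: hall].
- move=> m; apply: T_mono => // i _; exact: hx.
- split; first by move=> m; apply: (T_le_S hS hx).
  move=> tau htau; rewrite /lowner.
  by apply: (@psd_closed _ _ _ _ 0%N (mx_cvgBl (proj1_sig tau) (mx_cvgS hS))) => k _; apply: htau.
Qed.

End Main3.
Theorem mainTheorem1 (R : realType) (n : nat) (d : Order.disp_t)
  (A : porderType d) (alpha : set (PDO R n) -> A) (gamma : A -> set (PDO R n)) :
  complete_lattice A ->
  galois_embedding alpha gamma ->
  [<-> well_structured alpha gamma;
       sum_closed gamma;
       forall a : A,
         [/\ convex_pdo (gamma a), omega_cpo_pdo (gamma a),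
             down_closed_pdo (gamma a) & scale_closed_pdo (gamma a)]].
Proof.
move=> _ hge; split; [|split].
- by move=> h; apply: (ws_sc hge h).
- move=> hsc a; split.
  + exact: (sc_convex hsc).
  + exact: (sc_ocpo hsc).
  + exact: (sc_down hsc).
  + exact: (sc_scale hsc).
- by move=> h3; apply: (sc_ws hge); apply: c3_sc.
Qed.
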